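(* Let $f$ be a partitioning of the complete directed graph with loops $K_N$ (vertex set $V$, $|V|=N$, edge set $V\times V$) into $n$ partitions such that $\mathrm{ib}(f)\le 1+\varepsilon$ and $\mathrm{rf}(f)=k$. Then there exists an $\varepsilon$-balanced intersecting system on $n$ elements with cardinality $k$.
   Context: A partitioning of a directed graph $G=(V,E)$ into $n$ partitions is a function $f:E\to P$, $|P|=n$ (identify $P=[n]$). Its imbalance is $\mathrm{ib}(f)=\dfrac{\max_{l\in P}|\{e\in E: f(e)=l\}|}{|E|/n}$. For $v\in V$, $E(v)$ is the set of edges incident to $v$, $\mathrm{rf}(f,v)=|f(E(v))|$, and $\mathrm{rf}(f)=\max_{v\in V}\mathrm{rf}(f,v)$. A system on $n$ elements is a triple $(\mathcal{F},w,s)$ where $\mathcal{F}=(F_1,\dots,F_m)$ is a collection of subsets of $[n]$, $w\in[0,1]^m$ with $\sum_i w_i=1$, and $s\in[0,1]^{m\times m\times n}$ with $\sum_p s_{ijp}=1$ for all $i,j$. It is intersecting if $s_{ijp}>0$ implies $p\in F_i\cap F_j$. It is $\varepsilon$-balanced if for all $p\in[n]$, $\sum_{i=1}^m\sum_{j=1}^m w_iw_js_{ijp}\le (1+\varepsilon)/n$. Its cardinality is the size of the largest set in $\mathcal{F}$. *)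

(* Defs.v *)
From HB Require Import structures.
From mathcomp Require Import all_boot all_order all_algebra.
Set Implicit Arguments. Unset Strict Implicit. Unset Printing Implicit Defensive.
Import Order.TTheory GRing.Theory Num.Theory.
Local Open Scope ring_scope.

(* Complete directed graph with loops K_N: vertices 'I_N, edges 'I_N * 'I_N.
   A partitioning into n partitions: a function from edges to 'I_n. *)
Definition partitioning (N n : nat) := {ffun 'I_N * 'I_N -> 'I_n}.

Definition part_size N n (f : partitioning N n) (l : 'I_n) : nat :=
  #|[set e | f e == l]|.

Definition ib (R : realFieldType) N n (f : partitioning N n) : R :=
  ((\max_(l < n) part_size f l)%N)%:R / ((#|[set: 'I_N * 'I_N]|)%:R / n%:R).

Definition incident N (v : 'I_N) : {set 'I_N * 'I_N} :=
  [set e | (e.1 == v) || (e.2 == v)].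

Definition rf_v N n (f : partitioning N n) (v : 'I_N) : nat :=
  #|f @: incident v|.
Definition rf N n (f : partitioning N n) : nat :=
  (\max_(v < N) rf_v f v)%N.

Definition is_system (R : realFieldType) n m
  (F : 'I_m -> {set 'I_n}) (w : 'I_m -> R) (s : 'I_m -> 'I_m -> 'I_n -> R) : Prop :=
  [/\ (forall i, 0 <= w i <= 1),
      \sum_(i < m) w i = 1,
      (forall i j p, 0 <= s i j p <= 1) &
      (forall i j, \sum_(p < n) s i j p = 1)].

Definition intersecting (R : realFieldType) n m
  (F : 'I_m -> {set 'I_n}) (s : 'I_m -> 'I_m -> 'I_n -> R) : Prop :=
  forall i j p, 0 < s i j p -> p \in F i :&: F j.

Definition eps_balanced (R : realFieldType) n m (eps : R)
  (w : 'I_m -> R) (s : 'I_m -> 'I_m -> 'I_n -> R) : Prop :=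
  forall p : 'I_n,
    \sum_(i < m) \sum_(j < m) w i * w j * s i j p <= (1 + eps) / n%:R.

Definition cardinality n m (F : 'I_m -> {set 'I_n}) : nat :=
  (\max_(i < m) #|F i|)%N.

(* Main.v *)
Require Import Defs.
From HB Require Import structures.
From mathcomp Require Import all_boot all_order all_algebra.
From mathcomp Require Import ring.
Import Order.TTheory GRing.Theory Num.Theory.
Local Open Scope ring_scope.

Theorem lemma2 (R : realFieldType) (N n k : nat) (eps : R)
  (f : partitioning N n) :
  (0 < N)%N ->
  ib R f <= 1 + eps ->
  rf f = k ->
  exists (m : nat) (F : 'I_m -> {set 'I_n}) (w : 'I_m -> R)
         (s : 'I_m -> 'I_m -> 'I_n -> R),
    [/\ is_system F w s, intersecting F s, eps_balanced eps w s
      & cardinality F = k].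
Proof.
move=> N0 hib hk.
have n0 : (0 < n)%N.
  by case: (f (Ordinal N0, Ordinal N0)) => i hi; exact: leq_ltn_trans (leq0n i) hi.
exists N, (fun v => f @: incident v), (fun _ => N%:R^-1),
  (fun u v p => (f (u, v) == p)%:R).
have N0R : (N%:R : R) != 0 by rewrite pnatr_eq0 -lt0n.
have n0R : (n%:R : R) != 0 by rewrite pnatr_eq0 -lt0n.
split.
- split.
  + move=> i; apply/andP; split; first by rewrite invr_ge0 ler0n.
    by rewrite invf_le1 ?ltr0n // ler1n.
  + by rewrite sumr_const card_ord -[_ *+ _]mulr_natl mulfV.
  + by move=> i j p; case: eqP => _; rewrite /= ?lexx ?ler01.
  + move=> i j; rewrite (bigD1 (f (i, j))) //= eqxx big1 ?addr0 //.
    by move=> p /negPf; rewrite eq_sym => ->.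
- move=> i j p; case: eqP => [<- _|]; last by rewrite ltxx.
  rewrite inE; apply/andP; split; apply/imsetP; exists (i, j) => //;
  by rewrite inE eqxx ?orbT.
- move=> p.
  have -> : \sum_(i < N) \sum_(j < N) N%:R^-1 * N%:R^-1 * (f (i, j) == p)%:R
      = N%:R^-1 * N%:R^-1 * (part_size f p)%:R :> R.
    under eq_bigr do rewrite -mulr_sumr.
    rewrite -mulr_sumr; congr (_ * _).
    rewrite pair_bigA /= /part_size -sum1_card big_mkcond /= natr_sum.
    rewrite [RHS]big_mkcond; apply: eq_bigr => -[a b] _; rewrite inE /=; by case: (f (a, b) == p).
  have hM : (part_size f p <= \max_(l < n) part_size f l)%N by exact: leq_bigmax.
  move: hib; rewrite /ib cardsT card_prod !card_ord natrM invf_div.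
  set M := ((\max_(l < n) part_size f l)%N)%:R => hib.
  have hpM : (part_size f p)%:R <= M :> R by rewrite ler_nat.
apply: (@le_trans _ _ (N%:R^-1 / N%:R * M)).
    by apply: ler_wpM2l => //; rewrite mulr_ge0 // invr_ge0 ler0n.
  rewrite ler_pdivlMr ?ltr0n //.
  have -> : N%:R^-1 / N%:R * M * n%:R = M * (n%:R / (N%:R * N%:R)) by field; rewrite N0R.
  exact: hib.
- by subst k.
Qed.
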